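(* Let $p\in\{1,2\}$, $\varepsilon\ge0$ (with $\varepsilon=0$ when $p=2$), and let $\hat\nu$ be an optimal barycenter, i.e. a minimizer of $\Psi_p$. (i) If $\tilde\nu$ is the output of the reference algorithm with reference index $1$, then $\Psi_p(\tilde\nu)\le\frac{1+\varepsilon}{\lambda_1}\Psi_p(\hat\nu)$. If instead the reference index $j$ is chosen at random with probability $\lambda_j$ (and $\tilde\nu$ is the output of the reference algorithm with reference index $j$), then $\mathbb{E}[\Psi_p(\tilde\nu)]\le2(1+\varepsilon)\Psi_p(\hat\nu)$. (ii) If $\tilde\nu$ is the output of the pairwise algorithm, then $\Psi_p(\tilde\nu)\le2(1+\varepsilon)\Psi_p(\hat\nu)$.
   Context: $\|\cdot\|$ is the Euclidean norm on $\mathbb{R}^d$. For finitely supported probability measures $\mu,\nu$ on $\mathbb{R}^d$, $\mathcal{W}_p^p(\mu,\nu)\coloneqq\min_{\pi\in\Pi(\mu,\nu)}\int\|x-y\|^p\,d\pi$, with $\Pi(\mu,\nu)$ the set of couplings. Fix $N\ge2$, $\lambda\in\Delta_N\coloneqq\{\lambda\in(0,1)^N:\sum_i\lambda_i=1\}$, and discrete probability measures $\mu^i=\sum_{l=1}^{n_i}\mu^i_l\delta(x^i_l)$, $i=1,\dots,N$, with positive weights and pairwise distinct points for each $i$. $\Psi_p(\nu)\coloneqq\sum_{i=1}^N\lambda_i\mathcal{W}_p^p(\nu,\mu^i)$. Reference algorithm with reference index $j$ (parameters $p$, $\varepsilon$): let $\pi^{jj}\coloneqq\sum_k\mu^j_k\delta(x^j_k,x^j_k)$,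 and for $i\neq j$ let $\pi^{ji}=\sum_{k,l}\pi^{ji}_{k,l}\delta(x^j_k,x^i_l)\in\Pi(\mu^j,\mu^i)$ be an optimal plan for cost $\|x-y\|^p$ (so $\pi^{jj}_{k,l}=\mu^j_k$ if $l=k$ and $0$ otherwise). For $k=1,\dots,n_j$ let $f^j_k(m)\coloneqq\sum_{i=1}^N\lambda_i\sum_{l=1}^{n_i}\frac{\pi^{ji}_{k,l}}{\mu^j_k}\|m-x^i_l\|^p$ and choose $m^j_k$ with $f^j_k(m^j_k)\le(1+\varepsilon)\min_{m\in\mathbb{R}^d}f^j_k(m)$ (for $p=2$, $m^j_k$ is the exact minimizer, the weighted mean). The output is $\tilde\nu\coloneqq\sum_{k=1}^{n_j}\mu^j_k\delta(m^j_k)$. Pairwise algorithm (parameters $p$, $\varepsilon$): for all $i$ let $\pi^{ii}\coloneqq\sum_k\mu^i_k\delta(x^i_k,x^i_k)$; for $i<j$ let $\pi^{ij}=\sum_{k,l}\pi^{ij}_{k,l}\delta(x^i_k,x^j_l)\in\Pi(\mu^i,\mu^j)$ be an optimal plan for cost $\|x-y\|^p$, and $\pi^{ji}_{l,k}\coloneqq\pi^{ij}_{k,l}$ (the transposed plan). For each $i$ and $k=1,\dots,n_i$ let $f^i_k(m)\coloneqq\sum_{j=1}^N\lambda_j\sum_{l=1}^{n_j}\frac{\pi^{ij}_{k,l}}{\mu^i_k}\|m-x^j_l\|^p$ and choose $m^i_k$ with $f^i_k(m^i_k)\le(1+\varepsilon)\min_m f^i_k(m)$ (exact weighted mean for $p=2$).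 The output is $\tilde\nu\coloneqq\sum_{i=1}^N\lambda_i\sum_{k=1}^{n_i}\mu^i_k\delta(m^i_k)$. *)

(* Defs.v *)
From HB Require Import structures.
From mathcomp Require Import all_boot all_order all_algebra.
From mathcomp Require Import all_classical all_reals.
Set Implicit Arguments. Unset Strict Implicit. Unset Printing Implicit Defensive.
Import Order.TTheory GRing.Theory Num.Theory.
Local Open Scope classical_set_scope.
Local Open Scope ring_scope.

Section Defs.
Variables (R : realType) (d : nat).

Definition enorm (v : 'rV[R]_d) : R := Num.sqrt (\sum_(i < d) v 0 i ^+ 2).

(* A finitely supported probability measure is represented by a finite family
   of atoms: weights [a : I -> R] at points [x : I -> 'rV_d]. *)
Definition is_prob (I : finType) (a : I -> R) : Prop :=
  (forall i, 0 <= a i) /\ \sum_i a i = 1.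

Definition coupling (I J : finType) (a : I -> R) (b : J -> R)
  (P : I -> J -> R) : Prop :=
  [/\ forall i j, 0 <= P i j,
      forall i, \sum_j P i j = a i
    & forall j, \sum_i P i j = b j].

Definition tcost (p : nat) (I J : finType) (x : I -> 'rV[R]_d) (y : J -> 'rV[R]_d)
  (P : I -> J -> R) : R :=
  \sum_i \sum_j P i j * enorm (x i - y j) ^+ p.

Definition Wpp (p : nat) (I J : finType) (a : I -> R) (x : I -> 'rV[R]_d)
  (b : J -> R) (y : J -> 'rV[R]_d) : R :=
  inf [set c | exists P, coupling a b P /\ c = tcost p x y P].

Definition optimal_plan (p : nat) (I J : finType) (a : I -> R) (x : I -> 'rV[R]_d)
  (b : J -> R) (y : J -> 'rV[R]_d) (P : I -> J -> R) : Prop :=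
  coupling a b P /\
  forall P', coupling a b P' -> tcost p x y P <= tcost p x y P'.

Definition Psi (p N : nat) (lam : 'I_N -> R) (n : 'I_N -> nat)
  (w : forall i, 'I_(n i) -> R) (x : forall i, 'I_(n i) -> 'rV[R]_d)
  (J : finType) (b : J -> R) (y : J -> 'rV[R]_d) : R :=
  \sum_(i < N) lam i * Wpp p b y (w i) (x i).

(* Reference algorithm with reference index j: P i is the plan pi^{ji},
   m k is the chosen m^j_k. *)
Definition ref_output (p N : nat) (eps : R) (lam : 'I_N -> R) (n : 'I_N -> nat)
  (w : forall i, 'I_(n i) -> R) (x : forall i, 'I_(n i) -> 'rV[R]_d)
  (j : 'I_N) (P : forall i, 'I_(n j) -> 'I_(n i) -> R)
  (m : 'I_(n j) -> 'rV[R]_d) : Prop :=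
  let f := fun (k : 'I_(n j)) (z : 'rV[R]_d) =>
    \sum_(i < N) lam i * \sum_(l < n i) (P i k l / w j k) * enorm (z - x i l) ^+ p in
  [/\ forall i, i != j -> optimal_plan p (w j) (x j) (w i) (x i) (P i),
      forall k l : 'I_(n j), P j k l = if k == l then w j k else 0
    & forall k (z : 'rV[R]_d), f k (m k) <= (1 + eps) * f k z].

(* Pairwise algorithm: Q i j is the plan pi^{ij}, m i k is m^i_k. *)
Definition pair_output (p N : nat) (eps : R) (lam : 'I_N -> R) (n : 'I_N -> nat)
  (w : forall i, 'I_(n i) -> R) (x : forall i, 'I_(n i) -> 'rV[R]_d)
  (Q : forall i j, 'I_(n i) -> 'I_(n j) -> R)
  (m : forall i, 'I_(n i) -> 'rV[R]_d) : Prop :=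
  let f := fun (i : 'I_N) (k : 'I_(n i)) (z : 'rV[R]_d) =>
    \sum_(j < N) lam j * \sum_(l < n j) (Q i j k l / w i k) * enorm (z - x j l) ^+ p in
  [/\ forall i j : 'I_N, (i < j)%N -> optimal_plan p (w i) (x i) (w j) (x j) (Q i j),
      forall (i j : 'I_N) k l, (i < j)%N -> Q j i l k = Q i j k l,
      forall (i : 'I_N) (k l : 'I_(n i)), Q i i k l = if k == l then w i k else 0
    & forall i k (z : 'rV[R]_d), f i k (m i k) <= (1 + eps) * f i k z].

(* output measure of the pairwise algorithm: atoms indexed by pairs (i, k) *)
Definition pair_weights (N : nat) (lam : 'I_N -> R) (n : 'I_N -> nat)
  (w : forall i, 'I_(n i) -> R) : {i : 'I_N & 'I_(n i)} -> R :=
  fun t => lam (tag t) * w (tag t) (tagged t).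

Definition pair_points (N : nat) (n : 'I_N -> nat)
  (m : forall i, 'I_(n i) -> 'rV[R]_d) : {i : 'I_N & 'I_(n i)} -> 'rV[R]_d :=
  fun t => m (tag t) (tagged t).

End Defs.

(* Main.v *)
Require Import Defs.
From HB Require Import structures.
From mathcomp Require Import all_boot all_order all_algebra.
From mathcomp Require Import all_classical all_reals.
From mathcomp Require Import ring lra.
Import Order.TTheory GRing.Theory Num.Theory.
Local Open Scope classical_set_scope.
Local Open Scope ring_scope.
Set Implicit Arguments. Unset Strict Implicit.

Lemma enorm_ge0 (R : realType) (d : nat) (v : 'rV[R]_d) : 0 <= enorm v.
Proof. exact: sqrtr_ge0. Qed.

Lemma enorm_sq (R : realType) (d : nat) (v : 'rV[R]_d) :
  enorm v ^+ 2 = \sum_(i < d) v 0 i ^+ 2.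
Proof. by rewrite /enorm sqr_sqrtr // sumr_ge0 // => i _; exact: sqr_ge0. Qed.

Lemma enormN (R : realType) (d : nat) (v : 'rV[R]_d) : enorm (- v) = enorm v.
Proof. by rewrite /enorm; congr Num.sqrt; apply: eq_bigr => i _; rewrite mxE sqrrN. Qed.

Lemma enormB (R : realType) (d : nat) (a b : 'rV[R]_d) : enorm (a - b) = enorm (b - a).
Proof. by rewrite -opprB enormN. Qed.

Lemma enorm0 (R : realType) (d : nat) : enorm (0 : 'rV[R]_d) = 0.
Proof. by rewrite /enorm big1 ?sqrtr0 // => i _; rewrite mxE expr0n. Qed.

Lemma sum_prod (R : realType) (d : nat) (f g : 'I_d -> R) :
  \sum_i \sum_j f i * g j = (\sum_i f i) * (\sum_j g j).
Proof. by rewrite mulr_suml; apply: eq_bigr => i _; rewrite mulr_sumr. Qed.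

Lemma CS (R : realType) (d : nat) (a b : 'I_d -> R) :
  (\sum_i a i * b i) ^+ 2 <= (\sum_i a i ^+ 2) * (\sum_i b i ^+ 2).
Proof.
have H : 0 <= \sum_i \sum_j (a i * b j - a j * b i) ^+ 2.
  by apply: sumr_ge0 => i _; apply: sumr_ge0 => j _; exact: sqr_ge0.
have E : \sum_i \sum_j (a i * b j - a j * b i) ^+ 2 =
   2 * ((\sum_i a i ^+ 2) * (\sum_i b i ^+ 2)) - 2 * (\sum_i a i * b i) ^+ 2.
  transitivity (\sum_i \sum_j (a i ^+ 2 * b j ^+ 2) + \sum_i \sum_j (b i ^+ 2 * a j ^+ 2)
     - 2 * \sum_i \sum_j ((a i * b i) * (a j * b j))).
    rewrite mulr_sumr -!big_split -sumrN -big_split; apply: eq_bigr => i _.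
    rewrite mulr_sumr -!big_split -sumrN -big_split; apply: eq_bigr => j _ /=.
    ring.
  rewrite !sum_prod expr2; ring.
lra.
Qed.

Lemma enorm_tri (R : realType) (d : nat) (a b : 'rV[R]_d) :
  enorm (a - b) <= enorm a + enorm b.
Proof.
have ha := enorm_ge0 a; have hb := enorm_ge0 b.
rewrite -(@ler_pXn2r _ 2) // ?nnegrE ?addr_ge0 ?enorm_ge0 //.
have E1 : enorm (a - b) ^+ 2 = enorm a ^+ 2 + enorm b ^+ 2 - 2 * \sum_i a 0 i * b 0 i.
  rewrite !enorm_sq mulr_sumr -sumrN -!big_split; apply: eq_bigr => i _ /=.
  rewrite !mxE; ring.
have C : - (\sum_i a 0 i * b 0 i) <= enorm a * enorm b.
  apply: le_trans (ler_norm _) _; rewrite normrN.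
  rewrite -(@ler_pXn2r _ 2) // ?nnegrE ?mulr_ge0 // exprMn !enorm_sq real_normK ?num_real //.
  exact: CS.
rewrite E1 sqrrD; clear E1; move: C.
set P := enorm a * enorm b; set A2 := enorm a ^+ 2; set B2 := enorm b ^+ 2; set S := \sum_i _.
rewrite mulr2n; clearbody P A2 B2 S; lra.
Qed.

Lemma pt_ineq (R : realType) (d : nat) (p : nat) (Hp : p = 1%N \/ p = 2%N) (t : R)
  (Ht : 0 < t < 1) (a b : 'rV[R]_d) :
  enorm (a - b) ^+ p <= enorm a ^+ p / (1 - t) + enorm b ^+ p / t.
Proof.
have ha := enorm_ge0 a; have hb := enorm_ge0 b.
case/andP: Ht => t0 t1.
case: Hp => ->.
- rewrite !expr1; apply: le_trans (enorm_tri a b) _.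
  apply: lerD.
    by rewrite ler_pdivlMr ?subr_gt0 // ler_piMr // lerBlDr lerDl ltW.
  by rewrite ler_pdivlMr // ler_piMr // ltW.
- rewrite !enorm_sq !mulr_suml -big_split; apply: ler_sum => i _ /=.
  rewrite !mxE.
  set u := a 0 i; set v := b 0 i.
  have h1 : 0 < 1 - t by rewrite subr_gt0.
  rewrite -subr_ge0.
  have -> : u ^+ 2 / (1 - t) + v ^+ 2 / t - (u - v) ^+ 2 =
            (t * u + (1 - t) * v) ^+ 2 / (t * (1 - t)).
    by field; rewrite ?lt0r_neq0 //.
  by rewrite divr_ge0 ?sqr_ge0 ?mulr_ge0 ?ltW.
Qed.

Lemma tcost_ge0 (R : realType) (d p : nat) (I J : finType) (x : I -> 'rV[R]_d)
  (y : J -> 'rV[R]_d) (P : I -> J -> R) :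
  (forall i j, 0 <= P i j) -> 0 <= tcost p x y P.
Proof.
move=> HP; apply: sumr_ge0 => i _; apply: sumr_ge0 => j _.
by rewrite mulr_ge0 // exprn_ge0 // enorm_ge0.
Qed.

Lemma Wpp_le (R : realType) (d p : nat) (I J : finType) (a : I -> R) (x : I -> 'rV[R]_d)
  (b : J -> R) (y : J -> 'rV[R]_d) (P : I -> J -> R) :
  coupling a b P -> Wpp p a x b y <= tcost p x y P.
Proof.
move=> HP; apply: ge_inf; last by exists P.
exists 0 => c [Q [[HQ _ _] ->]]; exact: tcost_ge0.
Qed.

Lemma Wpp_approx (R : realType) (d p : nat) (I J : finType) (a : I -> R) (x : I -> 'rV[R]_d)
  (b : J -> R) (y : J -> 'rV[R]_d) (e : R) :
  is_prob a -> is_prob b -> 0 < e ->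
  exists P, coupling a b P /\ tcost p x y P <= Wpp p a x b y + e.
Proof.
move=> [a0 a1] [b0 b1] e0.
have ne : [set c | exists P, coupling a b P /\ c = tcost p x y P] !=set0.
  exists (tcost p x y (fun i j => a i * b j)); exists (fun i j => a i * b j); split => //.
  split => [i j|i|j]; first by rewrite mulr_ge0.
    by rewrite -mulr_sumr b1 mulr1.
  by rewrite -mulr_suml a1 mul1r.
have := @inf_lt _ _ (Wpp p a x b y + e) ne.
case; first by rewrite /Wpp ltrDl.
by move=> c [P [HP ->]] lt; exists P; split => //; exact: ltW.
Qed.

Lemma coupling_row0 (R : realType) (I J : finType) (a : I -> R) (b : J -> R) (g : I -> J -> R) y k :
  coupling a b g -> a y = 0 -> g y k = 0.
Proof.
move=> [g0 gr _] ay; apply: (@psumr_eq0P _ _ xpredT (g y)) => //.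
by rewrite gr.
Qed.

Definition gluep (R : realType) (nh : nat) (wh : 'I_nh -> R) (I1 I2 : finType)
  (g1 : 'I_nh -> I1 -> R) (g2 : 'I_nh -> I2 -> R) : I1 -> I2 -> R :=
  fun k l => \sum_y g1 y k * g2 y l / wh y.

Lemma glue_row (R : realType) (nh : nat) (wh : 'I_nh -> R) (I1 I2 : finType)
  (a1 : I1 -> R) (a2 : I2 -> R)
  (g1 : 'I_nh -> I1 -> R) (g2 : 'I_nh -> I2 -> R) y k :
  coupling wh a1 g1 -> coupling wh a2 g2 ->
  \sum_l g1 y k * g2 y l / wh y = g1 y k.
Proof.
move=> H1 [_ r2 _].
have [wy|wy] := eqVneq (wh y) 0.
  by rewrite (coupling_row0 k H1 wy) big1 // => l _; rewrite !mul0r.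
by rewrite -mulr_suml -mulr_sumr r2 -mulrA divff // mulr1.
Qed.

Lemma glue_col (R : realType) (nh : nat) (wh : 'I_nh -> R) (I1 I2 : finType)
  (a1 : I1 -> R) (a2 : I2 -> R)
  (g1 : 'I_nh -> I1 -> R) (g2 : 'I_nh -> I2 -> R) y l :
  coupling wh a1 g1 -> coupling wh a2 g2 ->
  \sum_k g1 y k * g2 y l / wh y = g2 y l.
Proof.
move=> H1 H2.
rewrite (eq_bigr (fun k => g2 y l * g1 y k / wh y)); last by move=> k _; rewrite (mulrC (g1 y k)).
exact: (glue_row y l H2 H1).
Qed.

Lemma glue_coupling (R : realType) (nh : nat) (wh : 'I_nh -> R) (I1 I2 : finType)
  (a1 : I1 -> R) (a2 : I2 -> R)
  (g1 : 'I_nh -> I1 -> R) (g2 : 'I_nh -> I2 -> R) :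
  (forall y, 0 <= wh y) -> coupling wh a1 g1 -> coupling wh a2 g2 ->
  coupling a1 a2 (gluep wh g1 g2).
Proof.
move=> w0 H1 H2; have [p1 _ c1] := H1; have [p2 _ c2] := H2.
split => [k l|k|l].
- by apply: sumr_ge0 => y _; rewrite divr_ge0 ?mulr_ge0.
- rewrite /gluep exchange_big -c1; apply: eq_bigr => y _; exact: glue_row H1 H2.
- rewrite /gluep exchange_big -c2; apply: eq_bigr => y _; exact: glue_col H1 H2.
Qed.

Lemma glue_cost (R : realType) (d p : nat) (nh : nat) (wh : 'I_nh -> R) (I1 I2 : finType)
  (g1 : 'I_nh -> I1 -> R) (g2 : 'I_nh -> I2 -> R)
  (x1 : I1 -> 'rV[R]_d) (x2 : I2 -> 'rV[R]_d) :
  tcost p x1 x2 (gluep wh g1 g2) =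
  \sum_y \sum_k \sum_l g1 y k * g2 y l / wh y * enorm (x1 k - x2 l) ^+ p.
Proof.
rewrite /tcost /gluep.
transitivity (\sum_k \sum_l \sum_y g1 y k * g2 y l / wh y * enorm (x1 k - x2 l) ^+ p).
  by apply: eq_bigr => k _; apply: eq_bigr => l _; rewrite mulr_suml.
under eq_bigr do rewrite exchange_big /=.
by rewrite exchange_big.
Qed.

Lemma glue_bound (R : realType) (d p : nat) (nh : nat) (wh : 'I_nh -> R) (xh : 'I_nh -> 'rV[R]_d)
  (I1 I2 : finType) (a1 : I1 -> R) (a2 : I2 -> R)
  (g1 : 'I_nh -> I1 -> R) (g2 : 'I_nh -> I2 -> R)
  (x1 : I1 -> 'rV[R]_d) (x2 : I2 -> 'rV[R]_d) (al be : R) :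
  (forall y, 0 <= wh y) -> coupling wh a1 g1 -> coupling wh a2 g2 ->
  (forall y k l, enorm (x1 k - x2 l) ^+ p <=
      enorm (xh y - x1 k) ^+ p * al + enorm (xh y - x2 l) ^+ p * be) ->
  tcost p x1 x2 (gluep wh g1 g2) <= tcost p xh x1 g1 * al + tcost p xh x2 g2 * be.
Proof.
move=> w0 H1 H2 Hpt; have [p1 _ _] := H1; have [p2 _ _] := H2.
rewrite glue_cost.
apply: le_trans (_ : \sum_y \sum_k \sum_l g1 y k * g2 y l / wh y *
   (enorm (xh y - x1 k) ^+ p * al + enorm (xh y - x2 l) ^+ p * be) <= _).
  apply: ler_sum => y _; apply: ler_sum => k _; apply: ler_sum => l _.
  by apply: ler_wpM2l => //; rewrite divr_ge0 ?mulr_ge0.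
rewrite /tcost !mulr_suml -big_split; rewrite le_eqVlt; apply/orP; left; apply/eqP.
apply: eq_bigr => y _ /=.
rewrite !mulr_suml.
under eq_bigr => k _ do rewrite (eq_bigr _ (fun l _ => mulrDr _ _ _)) big_split /=.
rewrite big_split /=; congr (_ + _).
  apply: eq_bigr => k _.
  by rewrite -mulr_suml (glue_row y k H1 H2) mulrA.
rewrite exchange_big /=; apply: eq_bigr => l _.
by rewrite -mulr_suml (glue_col y l H1 H2) mulrA.
Qed.

Lemma glue_lin (R : realType) (nh : nat) (wh : 'I_nh -> R)
  (I1 I2 : finType) (a1 : I1 -> R) (a2 : I2 -> R)
  (g1 : 'I_nh -> I1 -> R) (g2 : 'I_nh -> I2 -> R) (A : 'I_nh -> I1 -> R) (B : 'I_nh -> I2 -> R) :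
  coupling wh a1 g1 -> coupling wh a2 g2 ->
  \sum_y \sum_k \sum_l g1 y k * g2 y l / wh y * (A y k + B y l) =
  \sum_y \sum_k g1 y k * A y k + \sum_y \sum_l g2 y l * B y l.
Proof.
move=> H1 H2; rewrite -big_split; apply: eq_bigr => y _ /=.
under eq_bigr => k _ do rewrite (eq_bigr _ (fun l _ => mulrDr _ _ _)) big_split /=.
rewrite big_split /=; congr (_ + _).
  by apply: eq_bigr => k _; rewrite -mulr_suml (glue_row y k H1 H2).
rewrite exchange_big /=; apply: eq_bigr => l _.
by rewrite -mulr_suml (glue_col y l H1 H2).
Qed.

Definition Ev (R : realType) (d nh : nat) (xh : 'I_nh -> 'rV[R]_d) (I1 : finType)
  (g1 : 'I_nh -> I1 -> R) (x1 : I1 -> 'rV[R]_d) (y : 'I_nh) (c : 'I_d) : R :=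
  \sum_k g1 y k * (x1 k 0 c - xh y 0 c).

Lemma glue_cost2 (R : realType) (d nh : nat) (wh : 'I_nh -> R) (xh : 'I_nh -> 'rV[R]_d)
  (I1 I2 : finType) (a1 : I1 -> R) (a2 : I2 -> R)
  (g1 : 'I_nh -> I1 -> R) (g2 : 'I_nh -> I2 -> R)
  (x1 : I1 -> 'rV[R]_d) (x2 : I2 -> 'rV[R]_d) :
  coupling wh a1 g1 -> coupling wh a2 g2 ->
  tcost 2 x1 x2 (gluep wh g1 g2) = tcost 2 xh x1 g1 + tcost 2 xh x2 g2
    - 2 * \sum_y (wh y)^-1 * \sum_c Ev xh g1 x1 y c * Ev xh g2 x2 y c.
Proof.
move=> H1 H2; rewrite glue_cost.
have pt : forall y k l, enorm (x1 k - x2 l) ^+ 2 =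
   (enorm (xh y - x1 k) ^+ 2 + enorm (xh y - x2 l) ^+ 2)
   - 2 * \sum_c (x1 k 0 c - xh y 0 c) * (x2 l 0 c - xh y 0 c).
  move=> y k l; rewrite !enorm_sq mulr_sumr -sumrN -!big_split; apply: eq_bigr => c _ /=.
  rewrite !mxE; ring.
under eq_bigr => y _ do under eq_bigr => k _ do under eq_bigr => l _ do
  rewrite (pt y k l) mulrBr.
under eq_bigr => y _ do under eq_bigr => k _ do rewrite sumrB.
under eq_bigr => y _ do rewrite sumrB.
rewrite sumrB (glue_lin _ _ H1 H2); congr (_ - _).
rewrite mulr_sumr; apply: eq_bigr => y _.
rewrite /Ev mulr_sumr.
transitivity (\sum_k \sum_l \sum_c 2 * ((wh y)^-1 * ((g1 y k * (x1 k 0 c - xh y 0 c)) *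
     (g2 y l * (x2 l 0 c - xh y 0 c))))).
  apply: eq_bigr => k _; apply: eq_bigr => l _.
  rewrite !mulr_sumr; apply: eq_bigr => c _; ring.
under eq_bigr do rewrite exchange_big /=.
rewrite [LHS]exchange_big /= [RHS]mulr_sumr; apply: eq_bigr => c _.
rewrite big_distrlr !mulr_sumr; apply: eq_bigr => k _; rewrite !mulr_sumr.
by apply: eq_bigr => l _.
Qed.

Lemma sym_sum (R : realType) (N : nat) (lam C : 'I_N -> R) :
  \sum_(i < N) lam i = 1 ->
  \sum_i \sum_j lam i * lam j * (C i + C j) = 2 * \sum_i lam i * C i.
Proof.
move=> l1.
transitivity (\sum_i \sum_j (lam i * C i) * lam j + \sum_j \sum_i (lam j * C j) * lam i).
  rewrite [X in _ = _ + X]exchange_big -big_split; apply: eq_bigr => i _.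
  rewrite -big_split; apply: eq_bigr => j _ /=; ring.
have E : \sum_i \sum_j (lam i * C i) * lam j = \sum_i lam i * C i.
  by apply: eq_bigr => i _; rewrite -mulr_sumr l1 mulr1.
by rewrite E mulr2n mulrDl !mul1r.
Qed.

Lemma glue_var (R : realType) (d N : nat) (lam : 'I_N -> R)
  (lam0 : forall i, 0 <= lam i) (lam1 : \sum_i lam i = 1)
  (n : 'I_N -> nat) (w : forall i, 'I_(n i) -> R) (x : forall i, 'I_(n i) -> 'rV[R]_d)
  (nh : nat) (wh : 'I_nh -> R) (xh : 'I_nh -> 'rV[R]_d) (w0 : forall y, 0 <= wh y)
  (g : forall i, 'I_nh -> 'I_(n i) -> R) (Hg : forall i, coupling wh (w i) (g i))
  (p : nat) (Hp : p = 1%N \/ p = 2%N) :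
  \sum_i \sum_j lam i * lam j * tcost p (x i) (x j) (gluep wh (g i) (g j))
   <= 2 * \sum_i lam i * tcost p xh (x i) (g i).
Proof.
case: Hp => ->.
  rewrite -(sym_sum (fun i => tcost 1 xh (x i) (g i)) lam1).
  apply: ler_sum => i _; apply: ler_sum => j _.
  apply: ler_wpM2l; first by rewrite mulr_ge0.
  rewrite -[X in _ <= X + _]mulr1 -[X in _ <= _ + X]mulr1.
  apply: (glue_bound w0 (Hg i) (Hg j)) => y k l.
  rewrite !mulr1 !expr1.
  have -> : x i k - x j l = (x i k - xh y) - (x j l - xh y).
    by rewrite opprB addrA subrK.
  by rewrite (enormB (xh y)) (enormB (xh y)); exact: enorm_tri.
under eq_bigr => i _ do under eq_bigr => j _ do
  rewrite (glue_cost2 xh (x i) (x j) (Hg i) (Hg j)) mulrBr.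
under eq_bigr => i _ do rewrite sumrB.
rewrite sumrB sym_sum // lerBlDr lerDl.
set E := fun i y c => lam i * Ev xh (g i) (x i) y c.
have -> : \sum_i \sum_j lam i * lam j * (2 * \sum_y (wh y)^-1 *
      \sum_c Ev xh (g i) (x i) y c * Ev xh (g j) (x j) y c) =
    \sum_y \sum_c \sum_i \sum_j 2 * ((wh y)^-1 * (E i y c * E j y c)).
  transitivity (\sum_i \sum_j \sum_y \sum_c 2 * ((wh y)^-1 * (E i y c * E j y c))).
    apply: eq_bigr => i _; apply: eq_bigr => j _.
    rewrite !mulr_sumr; apply: eq_bigr => y _; rewrite !mulr_sumr; apply: eq_bigr => c _.
    rewrite /E; ring.
  under eq_bigr => i _ do rewrite exchange_big /=.
  rewrite exchange_big /=; apply: eq_bigr => y _.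
  under eq_bigr => i _ do rewrite exchange_big /=.
  by rewrite exchange_big.
apply: sumr_ge0 => y _; apply: sumr_ge0 => c _.
under eq_bigr => i _ do rewrite -mulr_sumr -mulr_sumr.
rewrite -mulr_sumr -mulr_sumr.
apply: mulr_ge0 => //; apply: mulr_ge0; first by rewrite invr_ge0.
rewrite -big_distrlr /=.
by rewrite -expr2 sqr_ge0.
Qed.

Lemma id_coupling (R : realType) (I : finType) (a : I -> R) (P : I -> I -> R) :
  (forall k, 0 <= a k) -> (forall k l, P k l = if k == l then a k else 0) ->
  coupling a a P.
Proof.
move=> a0 HP; split => [k l|k|l].
- by rewrite HP; case: ifP.
- rewrite (bigD1 k) //= HP eqxx big1 ?addr0 // => l /negbTE.
  by rewrite HP eq_sym => ->.
- rewrite (bigD1 l) //= HP eqxx big1 ?addr0 // => k /negbTE.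
  by rewrite HP => ->.
Qed.

Lemma id_tcost0 (R : realType) (d p : nat) (I : finType) (a : I -> R) (x : I -> 'rV[R]_d)
  (P : I -> I -> R) : (0 < p)%N ->
  (forall k l, P k l = if k == l then a k else 0) -> tcost p x x P = 0.
Proof.
move=> p0 HP; apply: big1 => k _; apply: big1 => l _.
rewrite HP; case: eqP => [->|_]; last by rewrite mul0r.
by rewrite subrr enorm0 expr0n eqn0Ngt p0 mulr0.
Qed.

Lemma tcost_tr (R : realType) (d p : nat) (I J : finType) (x : I -> 'rV[R]_d)
  (y : J -> 'rV[R]_d) (P : I -> J -> R) :
  tcost p y x (fun j i => P i j) = tcost p x y P.
Proof.
rewrite /tcost exchange_big; apply: eq_bigr => i _; apply: eq_bigr => j _.
by rewrite enormB.
Qed.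

Lemma tr_coupling (R : realType) (I J : finType) (a : I -> R) (b : J -> R) (P : I -> J -> R) :
  coupling a b P -> coupling b a (fun j i => P i j).
Proof. by case=> h1 h2 h3; split. Qed.

Lemma f_ident (R : realType) (d p N : nat) (lam : 'I_N -> R) (n : 'I_N -> nat)
  (w : forall i, 'I_(n i) -> R) (x : forall i, 'I_(n i) -> 'rV[R]_d) (i : 'I_N)
  (Pf : forall j, 'I_(n i) -> 'I_(n j) -> R) (z : 'I_(n i) -> 'rV[R]_d) :
  (forall k, w i k != 0) ->
  \sum_k w i k * (\sum_(j < N) lam j * \sum_(l < n j) (Pf j k l / w i k) * enorm (z k - x j l) ^+ p)
  = \sum_j lam j * tcost p z (x j) (Pf j).
Proof.
move=> w0.
transitivity (\sum_k \sum_j lam j * \sum_l Pf j k l * enorm (z k - x j l) ^+ p).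
  apply: eq_bigr => k _; rewrite mulr_sumr; apply: eq_bigr => j _.
  rewrite mulrCA; congr (_ * _); rewrite mulr_sumr; apply: eq_bigr => l _.
  by rewrite mulrA [w i k * _]mulrCA divff // mulr1.
rewrite exchange_big; apply: eq_bigr => j _; by rewrite /tcost mulr_sumr.
Qed.

Lemma alg_step (R : realType) (d p N : nat) (lam : 'I_N -> R) (n : 'I_N -> nat)
  (w : forall i, 'I_(n i) -> R) (x : forall i, 'I_(n i) -> 'rV[R]_d) (i : 'I_N)
  (Pf : forall j, 'I_(n i) -> 'I_(n j) -> R) (m : 'I_(n i) -> 'rV[R]_d) (eps : R) :
  (forall k, 0 < w i k) ->
  (forall k, (\sum_(j < N) lam j * \sum_(l < n j) (Pf j k l / w i k) * enorm (m k - x j l) ^+ p)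
     <= (1 + eps) * (\sum_(j < N) lam j * \sum_(l < n j) (Pf j k l / w i k) * enorm (x i k - x j l) ^+ p)) ->
  \sum_j lam j * tcost p m (x j) (Pf j) <= (1 + eps) * \sum_j lam j * tcost p (x i) (x j) (Pf j).
Proof.
move=> w0 Hm.
have w0' : forall k, w i k != 0 by move=> k; rewrite lt0r_neq0.
rewrite -(f_ident p lam x Pf m w0') -(f_ident p lam x Pf (x i) w0') mulr_sumr.
apply: ler_sum => k _; rewrite mulrCA; apply: ler_wpM2l; first exact: ltW.
exact: Hm.
Qed.

Lemma le_lim (R : realType) (a b K : R) : 0 < K ->
  (forall e, 0 < e -> a <= K * (b + e)) -> a <= K * b.
Proof.
move=> K0 H; apply/ler_addgt0Pr => e e0.
have := H (e / K) (divr_gt0 e0 K0).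
by rewrite mulrDr mulrCA divff ?lt0r_neq0 // mulr1.
Qed.

Lemma glue_pair (R : realType) (d p : nat) (Hp : p = 1%N \/ p = 2%N)
  (nh : nat) (wh : 'I_nh -> R) (xh : 'I_nh -> 'rV[R]_d)
  (I1 I2 : finType) (a1 : I1 -> R) (a2 : I2 -> R)
  (g1 : 'I_nh -> I1 -> R) (g2 : 'I_nh -> I2 -> R)
  (x1 : I1 -> 'rV[R]_d) (x2 : I2 -> 'rV[R]_d) (t : R) :
  0 < t < 1 -> (forall y, 0 <= wh y) -> coupling wh a1 g1 -> coupling wh a2 g2 ->
  tcost p x1 x2 (gluep wh g1 g2) <= tcost p xh x1 g1 / (1 - t) + tcost p xh x2 g2 / t.
Proof.
move=> Ht w0 H1 H2; apply: (glue_bound w0 H1 H2) => y k l.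
have -> : x1 k - x2 l = (x1 k - xh y) - (x2 l - xh y) by rewrite opprB addrA subrK.
by rewrite (enormB (xh y)) (enormB (xh y)); exact: pt_ineq.
Qed.

Lemma alg_i (R : realType) (N : nat) (lam C T : 'I_N -> R) (j : 'I_N) :
  (forall i, 0 <= lam i) -> \sum_i lam i = 1 -> 0 < lam j < 1 -> T j = 0 ->
  (forall i, i != j -> T i <= C j / (1 - lam j) + C i / lam j) ->
  \sum_i lam i * T i <= (\sum_i lam i * C i) / lam j.
Proof.
move=> l0 l1 /andP[lj0 lj1] Tj HT.
rewrite (bigD1 j) //= Tj mulr0 add0r.
apply: le_trans (_ : _ <= \sum_(i | i != j) lam i * (C j / (1 - lam j) + C i / lam j)) _.
  by apply: ler_sum => i ij; apply: ler_wpM2l => //; exact: HT.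
have h1 : 1 = lam j + \sum_(i | i != j) lam i by rewrite -l1 (bigD1 j).
rewrite [X in _ <= X / _](bigD1 j) //=.
have -> : \sum_(i | i != j) lam i * (C j / (1 - lam j) + C i / lam j) =
   C j / (1 - lam j) * (\sum_(i | i != j) lam i) + (\sum_(i | i != j) lam i * C i) / lam j.
  rewrite mulr_sumr mulr_suml -big_split; apply: eq_bigr => i _ /=; ring.
have -> : \sum_(i | i != j) lam i = 1 - lam j by rewrite h1 addrC addKr.
rewrite divfK ?subr_eq0 1?eq_sym ?lt_eqF // [X in _ <= X]mulrDl [lam j * C j]mulrC mulfK ?lt0r_neq0 //.
Qed.

Lemma Qcoup (R : realType) (d p N : nat) (lam : 'I_N -> R) (n : 'I_N -> nat)
  (w : forall i, 'I_(n i) -> R) (x : forall i, 'I_(n i) -> 'rV[R]_d) (eps : R)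
  (Q : forall i j, 'I_(n i) -> 'I_(n j) -> R) (m : forall i, 'I_(n i) -> 'rV[R]_d) :
  (forall i k, 0 <= w i k) -> pair_output p eps lam w x Q m ->
  forall i j, coupling (w i) (w j) (Q i j).
Proof.
move=> w0 [Hopt Htr Hid _] i j.
case: (ltngtP i j) => [ij|ji|/val_inj eij].
- by case: (Hopt i j ij) => ? _.
- have [[h1 h2 h3] _] := Hopt j i ji.
  split => [k l|k|l].
  + by rewrite (Htr j i).
  + by rewrite -h3; apply: eq_bigr => l _; rewrite (Htr j i).
  + by rewrite -h2; apply: eq_bigr => k _; rewrite (Htr j i).
- by subst j; exact: id_coupling (w0 i) (Hid i).
Qed.

Lemma pair_tcost (R : realType) (d p N : nat) (lam : 'I_N -> R) (n : 'I_N -> nat)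
  (Q : forall i j, 'I_(n i) -> 'I_(n j) -> R) (m : forall i, 'I_(n i) -> 'rV[R]_d)
  (x : forall i, 'I_(n i) -> 'rV[R]_d) (j : 'I_N) :
  tcost p (pair_points m) (x j) (fun t l => lam (tag t) * Q (tag t) j (tagged t) l) =
  \sum_i lam i * tcost p (m i) (x j) (Q i j).
Proof.
rewrite /tcost.
pose F := fun i (k : 'I_(n i)) => \sum_l lam i * Q i j k l * enorm (m i k - x j l) ^+ p.
transitivity (\sum_i \sum_k F i k).
  rewrite (sig_big_dep xpredT (fun i => xpredT) F) /=.
  by apply: eq_big => // -[i k].
apply: eq_bigr => i _; rewrite mulr_sumr; apply: eq_bigr => k _; rewrite mulr_sumr.
by apply: eq_bigr => l _; rewrite mulrA.
Qed.

Unset Implicit Arguments. Set Strict Implicit.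
Close Scope classical_set_scope.
Local Open Scope ring_scope.

Theorem corollary4p5 (R : realType) (d N : nat) (HN : (2 <= N)%N)
  (lam : 'I_N -> R) (Hlam : forall i, 0 < lam i < 1) (Hlam1 : \sum_(i < N) lam i = 1)
  (n : 'I_N -> nat) (w : forall i, 'I_(n i) -> R)
  (x : forall i, 'I_(n i) -> 'rV[R]_d)
  (Hwpos : forall i k, 0 < w i k) (Hw1 : forall i, \sum_(k < n i) w i k = 1)
  (Hxinj : forall i, injective (x i))
  (p : nat) (Hp : p = 1%N \/ p = 2%N) (eps : R) (Heps : 0 <= eps)
  (Hp2 : p = 2%N -> eps = 0)
  (nh : nat) (wh : 'I_nh -> R) (xh : 'I_nh -> 'rV[R]_d) (Hhprob : is_prob wh)
  (Hhopt : forall (n' : nat) (w' : 'I_n' -> R) (x' : 'I_n' -> 'rV[R]_d),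
     is_prob w' -> Psi p lam w x wh xh <= Psi p lam w x w' x') :
  (* (i) reference index 1 *)
  (forall (j1 : 'I_N), nat_of_ord j1 = 0%N ->
   forall (P : forall i, 'I_(n j1) -> 'I_(n i) -> R) (m : 'I_(n j1) -> 'rV[R]_d),
     ref_output p eps lam w x P m ->
     Psi p lam w x (w j1) m <= (1 + eps) / lam j1 * Psi p lam w x wh xh)
  /\
  (* (i) random reference index j with probability lam j *)
  (forall (P : forall j i, 'I_(n j) -> 'I_(n i) -> R)
          (m : forall j, 'I_(n j) -> 'rV[R]_d),
     (forall j, ref_output p eps lam w x (P j) (m j)) ->
     \sum_(j < N) lam j * Psi p lam w x (w j) (m j)
       <= 2 * (1 + eps) * Psi p lam w x wh xh)
  /\
  (* (ii) pairwise algorithm *)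
  (forall (Q : forall i j, 'I_(n i) -> 'I_(n j) -> R)
          (m : forall i, 'I_(n i) -> 'rV[R]_d),
     pair_output p eps lam w x Q m ->
     Psi p lam w x (pair_weights lam w) (pair_points m)
       <= 2 * (1 + eps) * Psi p lam w x wh xh).
Proof.
have lam0 : forall i, 0 <= lam i by move=> i; case/andP: (Hlam i) => /ltW.
have w0 : forall i k, 0 <= w i k by move=> i k; exact: ltW.
have wprob : forall i, is_prob (w i) by move=> i; split.
have [wh0 _] := Hhprob.
have p0 : (0 < p)%N by case: Hp => ->.
have eps1 : 0 < 1 + eps by rewrite ltr_pwDl.
have key : forall e, 0 < e -> exists g : forall i, 'I_nh -> 'I_(n i) -> R,
   (forall i, coupling wh (w i) (g i)) /\
   \sum_i lam i * tcost p xh (x i) (g i) <= Psi p lam w x wh xh + e.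
  move=> e e0.
  have Hex : forall i, exists P : 'I_nh -> 'I_(n i) -> R, coupling wh (w i) P /\
      tcost p xh (x i) P <= Wpp p wh xh (w i) (x i) + e.
    by move=> i; exact: Wpp_approx.
  exists (fun i => projT1 (cid (Hex i))); split => [i|].
    by case: (projT2 (cid (Hex i))).
  rewrite /Psi -[X in _ <= _ + X]mul1r -Hlam1 mulr_suml -big_split; apply: ler_sum => i _ /=.
  rewrite -mulrDr; apply: ler_wpM2l => //; by case: (projT2 (cid (Hex i))).
have refb : forall (j : 'I_N) (P : forall i, 'I_(n j) -> 'I_(n i) -> R) (m : 'I_(n j) -> 'rV[R]_d),
    ref_output p eps lam w x P m ->
    [/\ Psi p lam w x (w j) m <= (1 + eps) * \sum_i lam i * tcost p (x j) (x i) (P i),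
        tcost p (x j) (x j) (P j) = 0 &
        forall i Pc, i != j -> coupling (w j) (w i) Pc ->
          tcost p (x j) (x i) (P i) <= tcost p (x j) (x i) Pc].
  move=> j P m /= [Hopt Hid Hm].
  have Hc : forall i, coupling (w j) (w i) (P i).
    move=> i; have [eij|ne] := eqVneq i j.
      by subst i; exact: id_coupling (w0 j) Hid.
    by case: (Hopt i ne).
  split.
  - apply: le_trans (_ : _ <= \sum_i lam i * tcost p m (x i) (P i)) _.
      by apply: ler_sum => i _; apply: ler_wpM2l => //; exact: Wpp_le.
    apply: alg_step => // k; exact: Hm.
  - exact: id_tcost0 Hid.
  - by move=> i Pc ne Hc'; case: (Hopt i ne) => _; apply.
split; last split.
- move=> j1 _ P m Hro.
  have [H1 H2 H3] := refb j1 P m Hro.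
  apply: le_lim; first by rewrite divr_gt0 //; case/andP: (Hlam j1).
  move=> e e0; have [g [Hg Hs]] := key e e0.
  apply: le_trans H1 _; rewrite -mulrA; apply: ler_wpM2l; first exact: ltW.
  apply: le_trans (_ : _ <= (\sum_i lam i * tcost p xh (x i) (g i)) / lam j1) _.
    apply: (@alg_i _ _ lam (fun i => tcost p xh (x i) (g i))) => // i ne.
    apply: le_trans (H3 i _ ne (glue_coupling wh0 (Hg j1) (Hg i))) _.
    exact: (glue_pair Hp xh (x j1) (x i) (Hlam j1) wh0 (Hg j1) (Hg i)).
  rewrite [X in _ <= X]mulrC; apply: ler_wpM2r; last exact: Hs.
  by rewrite invr_ge0.
- move=> P m Hro.
  apply: le_lim; first by rewrite mulr_gt0.
  move=> e e0; have [g [Hg Hs]] := key e e0.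
  apply: le_trans (_ : _ <= (1 + eps) * (\sum_j \sum_i lam j * lam i *
      tcost p (x j) (x i) (gluep wh (g j) (g i)))) _.
    rewrite mulr_sumr; apply: ler_sum => j _.
    have [H1 H2 H3] := refb j (P j) (m j) (Hro j).
    under [X in _ <= _ * X]eq_bigr => i _ do rewrite -mulrA.
    rewrite -mulr_sumr mulrCA; apply: ler_wpM2l => //.
    apply: le_trans H1 _; apply: ler_wpM2l; first exact: ltW.
    apply: ler_sum => i _; apply: ler_wpM2l => //.
    have [eij|ne] := eqVneq i j.
      subst i; rewrite H2; apply: tcost_ge0 => k l.
      by case: (glue_coupling wh0 (Hg j) (Hg j)).
    exact: H3 i _ ne (glue_coupling wh0 (Hg j) (Hg i)).
  rewrite [2 * _]mulrC -mulrA; apply: ler_wpM2l; first exact: ltW.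
  apply: le_trans (glue_var lam0 Hlam1 x xh wh0 Hg Hp) _.
  by apply: ler_wpM2l.
- move=> Q m Hpo.
  have HQ := Qcoup w0 Hpo.
  case: Hpo => Hopt Htr Hid Hm.
  apply: le_lim; first by rewrite mulr_gt0.
  move=> e e0; have [g [Hg Hs]] := key e e0.
  have Hcp : forall j, coupling (pair_weights lam w) (w j)
      (fun t l => lam (tag t) * Q (tag t) j (tagged t) l).
    move=> j; split => [t l|t|l].
    + by rewrite mulr_ge0 //; case: (HQ (tag t) j) => h _ _; exact: h.
    + by rewrite -mulr_sumr; case: (HQ (tag t) j) => _ h _; rewrite h.
    + pose F := fun i (k : 'I_(n i)) => lam i * Q i j k l.
      transitivity (\sum_i \sum_k F i k).
        rewrite (sig_big_dep xpredT (fun i => xpredT) F) /=.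
        by apply: eq_big => // -[i k].
      have Hcol : forall i, \sum_k F i k = lam i * w j l.
        by move=> i; rewrite /F -mulr_sumr; case: (HQ i j) => _ _ ->.
      rewrite (eq_bigr _ (fun i _ => Hcol i)).
      by rewrite -mulr_suml Hlam1 mul1r.
  apply: le_trans (_ : _ <= \sum_j lam j * \sum_i lam i * tcost p (m i) (x j) (Q i j)) _.
    apply: ler_sum => j _; apply: ler_wpM2l => //.
    by rewrite -pair_tcost; exact: Wpp_le.
  apply: le_trans (_ : _ <= \sum_i lam i * ((1 + eps) * \sum_j lam j * tcost p (x i) (x j) (Q i j))) _.
    under eq_bigr => j _ do rewrite mulr_sumr.
    rewrite exchange_big /=; apply: ler_sum => i _.
    rewrite (eq_bigr (fun j => lam i * (lam j * tcost p (m i) (x j) (Q i j)))); last first.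
      by move=> j _; rewrite mulrCA.
    rewrite -mulr_sumr; apply: ler_wpM2l => //.
    apply: alg_step => // k; exact: Hm.
  under eq_bigr => i _ do rewrite mulrCA.
  rewrite -mulr_sumr [2 * _]mulrC -mulrA; apply: ler_wpM2l; first exact: ltW.
  apply: le_trans (_ : _ <= \sum_i \sum_j lam i * lam j *
      tcost p (x i) (x j) (gluep wh (g i) (g j))) _.
    apply: ler_sum => i _; rewrite mulr_sumr; apply: ler_sum => j _.
    rewrite mulrA; apply: ler_wpM2l; first by rewrite mulr_ge0.
    case: (ltngtP i j) => [ij|ji|/val_inj eij].
    + by case: (Hopt i j ij) => _; apply; exact: glue_coupling.
    + have E1 : tcost p (x i) (x j) (Q i j) = tcost p (x j) (x i) (Q j i).
        rewrite -tcost_tr /tcost; apply: eq_bigr => k _; apply: eq_bigr => l _.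
        by rewrite (Htr j i k l ji).
      have E2 : tcost p (x i) (x j) (gluep wh (g i) (g j)) =
                tcost p (x j) (x i) (gluep wh (g j) (g i)).
        rewrite -tcost_tr /tcost; apply: eq_bigr => k _; apply: eq_bigr => l _.
        congr (_ * _); rewrite /gluep; apply: eq_bigr => y _.
        by rewrite (mulrC (g i y l)).
      rewrite E1 E2; case: (Hopt j i ji) => _; apply; exact: glue_coupling.
    + subst j; rewrite (id_tcost0 (x i) p0 (Hid i)); apply: tcost_ge0 => k l.
      by case: (glue_coupling wh0 (Hg i) (Hg i)).
  apply: le_trans (glue_var lam0 Hlam1 x xh wh0 Hg Hp) _.
  by apply: ler_wpM2l.
Qed.
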